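(* Both drift-plus-penalty (DPP) scheduling algorithms described in the context (the one for average AoI minimization and the one for average peak-AoI minimization) guarantee that the data queue at node $S_1$ is strongly stable. The queue backlog $Q(t)$ of $S_1$ satisfies \[ \limsup_{t\rightarrow \infty} \frac{1}{t}\sum_{\tau=0}^{t-1}\mathbb{E}[Q(\tau)]\leq \frac{C+V}{\epsilon}. \] This inequality holds for any value of $\epsilon$ bounded by $0\leq \epsilon\leq \min\{p_{1/1}-\lambda, \delta\cdot p_{2/1,2}\}$. Here, $C=\frac{\lambda^2+1}{2}$ for the AoI-minimization algorithm and $C=\frac{\alpha_{\max}^2+\lambda^2+2}{2}$ for the peak-AoI-minimization algorithm, and $V$ is a constant weight that affects the tradeoff between performance optimization and queue congestion.
   Context: Time-slotted multiple access channel: two source nodes transmit to a common destination. Node $S_1$ is grid-connected; data packets arrive at its infinite queue as a Bernoulli process $a_1(t)$ with probability $\lambda$, and $Q(t+1)=\max[Q(t)-b_1(t),0]+a_1(t)$, where $b_1(t)=1$ iff a packet of $S_1$ is successfully received in slot $t$. Node $S_2$ is an energy-harvesting sensor: energy arrivals $a_2(t)$ are Bernoulli with probability $\delta$, battery $B(t+1)=\max[B(t)-u_2(t),0]+a_2(t)$, each transmission uses one energy unit, and $H(t)=\mathds{1}\{B(t)>0\}$ (indicator that the battery is non-empty). Scheduling decision $\mathbf{U}(t)=(u_1(t),u_2(t))\in\{(1,1),(1,0),(0,1),(0,0)\}$. Success probabilities: $p_{i/i}$ when only $S_i$ transmits, $p_{i/i,j}$ when both transmit. Conditional success probabilities: $p_1(t)=p_{1/1,2}$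 if $\mathbf{U}(t)=(1,1)$, $p_{1/1}$ if $(1,0)$, $0$ otherwise; $p_2(t)=p_{2/1,2}$ if $(1,1)$, $p_{2/2}$ if $(0,1)$, $0$ otherwise; $b_i(t)$ is the success indicator of $S_i$ given $\mathbf{U}(t)$. The AoI of $S_2$ evolves as $A(t+1)=A(t)+1-H(t)b_2(t)A(t)$. The problem is assumed feasible, $\lambda<p_{1/1}$. AoI-minimization DPP algorithm: in each slot $t$, observe $Q(t),A(t),H(t)$ and choose $\mathbf{U}(t)$ maximizing $p_1(t)Q(t)+V p_2(t)H(t)A(t)$, with $V>0$ a constant penalty weight; then update $Q,B,A$. Peak-AoI-minimization DPP algorithm: with constants $\alpha_{\max}$ (sufficiently large) and $V$, and a virtual queue $Z(t+1)=\max[Z(t)+\alpha(t)-H(t)b_2(t),0]$, $Z(0)=0$: in each slot observe $Q(t),Z(t),H(t)$ and choose $\mathbf{U}(t)$ maximizing $Z(t)H(t)p_2(t)+Q(t)p_1(t)$; set the auxiliary variable $\alpha(t)=\alpha_{\max}$ if $Z(t)\le V$ and $\alpha(t)=0$ otherwise; then update $Q,B,Z$. Both start from $Q(0)=0$, $B(0)=0$. *)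

(* Defs.v *)
From Stdlib Require Import Reals List Arith.
From Coquelicot Require Import Coquelicot.
Open Scope R_scope.

Definition decision := (bool * bool)%type.

Definition bern (p : R) (b : bool) : R := if b then p else 1 - p.

Definition p1 (p11 p112 : R) (u : decision) : R :=
  match u with (true, true) => p112 | (true, false) => p11 | _ => 0 end.
Definition p2 (p22 p212 : R) (u : decision) : R :=
  match u with (true, true) => p212 | (false, true) => p22 | _ => 0 end.

(** Joint law of (b1(t), b2(t)) given U(t).  When both transmit, the joint law
    is an arbitrary coupling [pj] with marginals p_{1/1,2}, p_{2/1,2}. *)
Definition succ_prob (p11 p22 : R) (pj : bool -> bool -> R) (u : decision)
    (b1 b2 : bool) : R :=
  match u with
  | (true, true) => pj b1 b2
  | (true, false) => if b2 then 0 else bern p11 b1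
  | (false, true) => if b1 then 0 else bern p22 b2
  | (false, false) => if orb b1 b2 then 0 else 1
  end.

Definition bools : list bool := true :: false :: nil.
Definition outcomes : list (bool * bool * bool * bool) :=
  flat_map (fun a1 => flat_map (fun a2 => flat_map (fun b1 =>
    map (fun b2 => (a1, a2, b1, b2)) bools) bools) bools) bools.

Definition slot_prob (lam delta p11 p22 : R) (pj : bool -> bool -> R)
    (u : decision) (o : bool * bool * bool * bool) : R :=
  let '(a1, a2, b1, b2) := o in
  bern lam a1 * bern delta a2 * succ_prob p11 p22 pj u b1 b2.

(** Expectation of [f] of the state of a finite-branching Markov chain, [n]
    slots after being in state [s] at time [t]; [step t s] lists the
    (probability, next state) pairs of the transition at slot [t]. *)
Fixpoint expect {St : Type} (step : nat -> St -> list (R * St)) (n t : nat)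
    (s : St) (f : St -> R) : R :=
  match n with
  | O => f s
  | S n' => fold_right (fun ps acc => fst ps * expect step n' (S t) (snd ps) f + acc)
              0 (step t s)
  end.

Definition Hn (B : nat) : nat := if Nat.ltb 0 B then 1%nat else 0%nat.

Definition aoi_obj (p11 p22 p112 p212 V : R) (Q B A : nat) (u : decision) : R :=
  p1 p11 p112 u * INR Q + V * p2 p22 p212 u * INR (Hn B) * INR A.

(** The policy picks, in every slot and every state, a maximizer of the
    DPP objective (ties broken arbitrarily, possibly time-dependently). *)
Definition aoi_maximizer (p11 p22 p112 p212 V : R)
    (pol : nat -> nat -> nat -> nat -> decision) : Prop :=
  forall t Q B A (u : decision),
    aoi_obj p11 p22 p112 p212 V Q B A u
      <= aoi_obj p11 p22 p112 p212 V Q B A (pol t Q B A).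

Definition aoi_next (u : decision) (s : nat * nat * nat)
    (o : bool * bool * bool * bool) : nat * nat * nat :=
  let '(Q, B, A) := s in
  let '(a1, a2, b1, b2) := o in
  ((Q - Nat.b2n b1) + Nat.b2n a1,
   (B - Nat.b2n (snd u)) + Nat.b2n a2,
   A + 1 - Hn B * Nat.b2n b2 * A)%nat.

Definition aoi_step (lam delta p11 p22 : R) (pj : bool -> bool -> R)
    (pol : nat -> nat -> nat -> nat -> decision) (t : nat) (s : nat * nat * nat)
    : list (R * (nat * nat * nat)) :=
  let '(Q, B, A) := s in
  let u := pol t Q B A in
  map (fun o => (slot_prob lam delta p11 p22 pj u o, aoi_next u s o)) outcomes.

Definition EQ_aoi (lam delta p11 p22 : R) (pj : bool -> bool -> R)
    (pol : nat -> nat -> nat -> nat -> decision) (A0 : nat) (tau : nat) : R :=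
  expect (aoi_step lam delta p11 p22 pj pol) tau 0 (0%nat, 0%nat, A0)
    (fun s => let '(Q, _, _) := s in INR Q).

Definition peak_obj (p11 p22 p112 p212 : R) (Q B : nat) (Z : R) (u : decision) : R :=
  Z * INR (Hn B) * p2 p22 p212 u + INR Q * p1 p11 p112 u.

Definition peak_maximizer (p11 p22 p112 p212 : R)
    (pol : nat -> nat -> nat -> R -> decision) : Prop :=
  forall t Q B Z (u : decision),
    peak_obj p11 p22 p112 p212 Q B Z u
      <= peak_obj p11 p22 p112 p212 Q B Z (pol t Q B Z).

Definition alpha (amax V Z : R) : R := if Rle_dec Z V then amax else 0.

Definition peak_next (amax V : R) (u : decision) (s : nat * nat * R)
    (o : bool * bool * bool * bool) : nat * nat * R :=
  let '(Q, B, Z) := s in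
  let '(a1, a2, b1, b2) := o in
  ((Q - Nat.b2n b1) + Nat.b2n a1,
   (B - Nat.b2n (snd u)) + Nat.b2n a2,
   Rmax (Z + alpha amax V Z - INR (Hn B) * INR (Nat.b2n b2)) 0)%nat.

Definition peak_step (lam delta p11 p22 amax V : R) (pj : bool -> bool -> R)
    (pol : nat -> nat -> nat -> R -> decision) (t : nat) (s : nat * nat * R)
    : list (R * (nat * nat * R)) :=
  let '(Q, B, Z) := s in
  let u := pol t Q B Z in
  map (fun o => (slot_prob lam delta p11 p22 pj u o, peak_next amax V u s o)) outcomes.

Definition EQ_peak (lam delta p11 p22 amax V : R) (pj : bool -> bool -> R)
    (pol : nat -> nat -> nat -> R -> decision) (tau : nat) : R :=
  expect (peak_step lam delta p11 p22 amax V pj pol) tau 0 (0%nat, 0%nat, 0)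
    (fun s => let '(Q, _, _) := s in INR Q).

Definition time_avg (x : nat -> R) (t : nat) : R :=
  / INR t * fold_right Rplus 0 (map x (seq 0 t)).

(* Main.v *)
Require Import Defs.
From Stdlib Require Import Reals List Lra Lia.
From Coquelicot Require Import Coquelicot.
Open Scope R_scope.

Definition wsum {St : Type} (l : list (R * St)) (F : St -> R) : R :=
  fold_right (fun ps acc => fst ps * F (snd ps) + acc) 0 l.

Lemma wsum_plus {St} (l : list (R*St)) F G :
  wsum l (fun s => F s + G s) = wsum l F + wsum l G.
Proof. induction l; simpl; [lra|]. unfold wsum in *. simpl. rewrite IHl. ring. Qed.

Lemma wsum_scal {St} (l : list (R*St)) c F :
  wsum l (fun s => c * F s) = c * wsum l F.
Proof. induction l; unfold wsum in *; simpl; [ring|]. rewrite IHl. ring. Qed.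

Lemma wsum_const {St} (l : list (R*St)) c :
  wsum l (fun _ => c) = c * wsum l (fun _ => 1).
Proof. induction l; unfold wsum in *; simpl; [ring|]. rewrite IHl. ring. Qed.

Lemma wsum_zero {St} (l : list (R*St)) : wsum l (fun _ => 0) = 0.
Proof. induction l; unfold wsum in *; simpl; [ring|]. rewrite IHl. ring. Qed.

Lemma wsum_le {St} (l : list (R*St)) F G :
  (forall x, In x l -> 0 <= fst x /\ F (snd x) <= G (snd x)) ->
  wsum l F <= wsum l G.
Proof.
  induction l as [|a l IH]; intros H; unfold wsum in *; simpl; [lra|].
  destruct (H a (or_introl eq_refl)) as [H1 H2].
  assert (fold_right (fun ps acc => fst ps * F (snd ps) + acc) 0 l <=
          fold_right (fun ps acc => fst ps * G (snd ps) + acc) 0 l)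
    by (apply IH; intros; apply H; simpl; auto).
  assert (fst a * F (snd a) <= fst a * G (snd a)) by (apply Rmult_le_compat_l; auto).
  lra.
Qed.

Lemma wsum_nonneg {St} (l : list (R*St)) F :
  (forall x, In x l -> 0 <= fst x /\ 0 <= F (snd x)) -> 0 <= wsum l F.
Proof.
  intros H. rewrite <- (wsum_zero l). apply wsum_le. intros x Hx.
  destruct (H x Hx); split; auto.
Qed.

Lemma expect_S {St} (step : nat -> St -> list (R*St)) n t s f :
  expect step (S n) t s f = wsum (step t s) (fun s' => expect step n (S t) s' f).
Proof. reflexivity. Qed.

Definition Fsum {St} (step : nat -> St -> list (R*St)) (g : St -> R) n t s : R :=
  fold_right Rplus 0 (map (fun k => expect step k t s g) (seq 0 n)).

Lemma sum_wsum {St} (l : list (R*St)) (H : nat -> St -> R) (L : list nat) :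
  fold_right Rplus 0 (map (fun k => wsum l (H k)) L) =
  wsum l (fun s' => fold_right Rplus 0 (map (fun k => H k s') L)).
Proof.
  induction L; simpl. rewrite wsum_zero; auto.
  rewrite IHL. rewrite <- wsum_plus. reflexivity.
Qed.

Lemma Fsum_S {St} (step : nat -> St -> list (R*St)) g n t s :
  Fsum step g (S n) t s = g s + wsum (step t s) (fun s' => Fsum step g n (S t) s').
Proof.
  unfold Fsum. simpl. f_equal. rewrite <- seq_shift, map_map.
  rewrite <- sum_wsum. reflexivity.
Qed.

Lemma drift_sum {St} (step : nat -> St -> list (R*St)) (I : St -> Prop)
  (Phi g : St -> R) (K eps : R) :
  (forall t s, I s -> forall x, In x (step t s) -> 0 <= fst x /\ I (snd x)) ->
  (forall t s, I s -> wsum (step t s) (fun _ => 1) = 1) ->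
  (forall t s, I s -> wsum (step t s) Phi <= Phi s + K - eps * g s) ->
  forall n t s, I s ->
    eps * Fsum step g n t s + expect step n t s Phi <= Phi s + INR n * K.
Proof.
  intros Hw H1 Hd n. induction n as [|n IH]; intros t s Hs.
  - unfold Fsum; simpl. lra.
  - rewrite Fsum_S, expect_S, S_INR.
    assert (E : eps * (g s + wsum (step t s) (fun s' => Fsum step g n (S t) s')) +
      wsum (step t s) (fun s' => expect step n (S t) s' Phi) =
      eps * g s + wsum (step t s) (fun s' => eps * Fsum step g n (S t) s' +
                                             expect step n (S t) s' Phi)).
    { rewrite (wsum_plus (step t s) (fun s' => eps * Fsum step g n (S t) s')
          (fun s' => expect step n (S t) s' Phi)).
      rewrite (wsum_scal (step t s) eps).
      assert (wsum (step t s) (fun s' => Fsum step g n (S t) s') = wsum (step t s) (Fsum step g n (S t))) as -> by reflexivity. ring. }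
    rewrite E.
    assert (L : wsum (step t s) (fun s' => eps * Fsum step g n (S t) s' +
                                             expect step n (S t) s' Phi)
             <= wsum (step t s) (fun s' => Phi s' + INR n * K)).
    { apply wsum_le. intros x Hx. destruct (Hw t s Hs x Hx). split; auto. }
    rewrite (wsum_plus (step t s) Phi (fun _ => INR n * K)), (wsum_const (step t s) (INR n * K)), H1 in L by auto.
    specialize (Hd t s Hs). lra.
Qed.

Lemma expect_nonneg {St} (step : nat -> St -> list (R*St)) (f : St -> R) :
  (forall t s x, In x (step t s) -> 0 <= fst x) -> (forall s, 0 <= f s) ->
  forall n t s, 0 <= expect step n t s f.
Proof.
  intros Hw Hf n; induction n; intros t s; simpl; auto.
  change (0 <= wsum (step t s) (fun s' => expect step n (S t) s' f)).
  apply wsum_nonneg. intros; split; eauto.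
Qed.

Lemma limsup_bound (u : nat -> R) (c d : R) :
  (forall n, (1 <= n)%nat -> u n <= c + d / INR n) ->
  Rbar_le (LimSup_seq u) (Finite c).
Proof.
  intros H.
  assert (Hl : is_lim_seq (fun n => c + d * / INR n) (c + d * 0)).
  { apply is_lim_seq_plus'. apply is_lim_seq_const.
    apply (is_lim_seq_scal_l _ d (Finite 0)).
    replace (Finite 0) with (Rbar_inv p_infty) by reflexivity.
    apply is_lim_seq_inv. apply is_lim_seq_INR. discriminate. }
  rewrite Rmult_0_r, Rplus_0_r in Hl.
  apply is_lim_LimSup_seq, is_LimSup_seq_unique in Hl.
  rewrite <- Hl. apply LimSup_le. exists 1%nat. intros n Hn. apply H; auto.
Qed.

Definition b2r (b : bool) : R := if b then 1 else 0.

Definition wsumO {O} (l : list O) (w F : O -> R) : R :=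
  fold_right (fun o acc => w o * F o + acc) 0 l.

Lemma wsum_map {O St} (l : list O) (w : O -> R) (nx : O -> St) F :
  wsum (map (fun o => (w o, nx o)) l) F = wsumO l w (fun o => F (nx o)).
Proof. induction l; unfold wsum, wsumO in *; simpl; auto. rewrite IHl; auto. Qed.

Lemma wsumO_le {O} (l : list O) w F G :
  (forall o, 0 <= w o) -> (forall o, F o <= G o) -> wsumO l w F <= wsumO l w G.
Proof.
  intros Hw H; induction l; unfold wsumO in *; simpl; [lra|].
  assert (w a * F a <= w a * G a) by (apply Rmult_le_compat_l; auto). lra.
Qed.

Definition lin (c x y z : R) (o : bool * bool * bool * bool) : R :=
  let '(a1, a2, b1, b2) := o in c + x * b2r a1 + y * b2r b1 + z * b2r b2.

Lemma bern_nn p b : 0 <= p <= 1 -> 0 <= bern p b.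
Proof. destruct b; simpl; lra. Qed.

Lemma slot_nn lam delta p11 p22 pj u o :
  0 <= lam <= 1 -> 0 <= delta <= 1 -> 0 <= p11 <= 1 -> 0 <= p22 <= 1 ->
  (forall b1 b2, 0 <= pj b1 b2) -> 0 <= slot_prob lam delta p11 p22 pj u o.
Proof.
  intros. destruct o as [[[a1 a2] b1] b2]. unfold slot_prob.
  apply Rmult_le_pos; [apply Rmult_le_pos; apply bern_nn; auto|].
  destruct u as [[|] [|]]; simpl; auto;
  repeat match goal with |- context [if ?b then _ else _] => destruct b end;
  try lra; apply bern_nn; auto.
Qed.

Lemma EU_lin lam delta p11 p22 p112 p212 pj u c x y z :
  pj true true + pj true false + pj false true + pj false false = 1 ->
  pj true true + pj true false = p112 ->
  pj true true + pj false true = p212 ->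
  wsumO outcomes (slot_prob lam delta p11 p22 pj u) (lin c x y z) =
  c + x * lam + y * p1 p11 p112 u + z * p2 p22 p212 u.
Proof.
  intros Hs H1 H2. rewrite <- H1, <- H2.
  assert (E : pj false false = 1 - pj true true - pj true false - pj false true) by lra.
  destruct u as [[|] [|]]; unfold wsumO; simpl; try rewrite E; ring.
Qed.

Lemma EU_one lam delta p11 p22 p112 p212 pj u :
  pj true true + pj true false + pj false true + pj false false = 1 ->
  pj true true + pj true false = p112 ->
  pj true true + pj false true = p212 ->
  wsumO outcomes (slot_prob lam delta p11 p22 pj u) (fun _ => 1) = 1.
Proof.
  intros. transitivity (wsumO outcomes (slot_prob lam delta p11 p22 pj u) (lin 1 0 0 0)).
  - unfold wsumO; simpl; ring.
  - erewrite EU_lin by eauto. ring.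
Qed.

Lemma qbound Q a1 b1 :
  INR ((Q - Nat.b2n b1) + Nat.b2n a1) ^ 2 / 2 <=
  INR Q ^ 2 / 2 + INR Q * (b2r a1 - b2r b1) + 1 / 2.
Proof.
  destruct a1, b1, Q as [|q]; simpl Nat.b2n; unfold b2r;
  rewrite ?Nat.sub_0_r, ?plus_INR, ?S_INR; simpl; try (rewrite Nat.sub_0_r);
  rewrite ?plus_INR, ?S_INR; simpl; try nra;
  pose proof (pos_INR q); nra.
Qed.

Lemma Hn01 B : Hn B = 0%nat \/ Hn B = 1%nat.
Proof. unfold Hn. destruct (Nat.ltb 0 B); auto. Qed.

Lemma abound A B b2 :
  INR (A + 1 - Hn B * Nat.b2n b2 * A) = INR A + 1 - INR (Hn B) * b2r b2 * INR A.
Proof.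
  destruct (Hn01 B) as [-> | ->]; destruct b2; simpl Nat.b2n; unfold b2r.
  all: try (replace (A + 1 - 0 * 1 * A)%nat with (A + 1)%nat by lia).
  all: try (replace (A + 1 - 0 * 0 * A)%nat with (A + 1)%nat by lia).
  all: try (replace (A + 1 - 1 * 0 * A)%nat with (A + 1)%nat by lia).
  all: try (replace (A + 1 - 1 * 1 * A)%nat with 1%nat by lia).
  all: rewrite ?plus_INR; simpl; ring.
Qed.

Section S.
Variables (lam delta p11 p22 p112 p212 V amax eps : R) (pj : bool -> bool -> R).
Hypotheses (Hlam : 0 <= lam <= 1) (Hdel : 0 <= delta <= 1) (Hp11 : 0 <= p11 <= 1)
  (Hp22 : 0 <= p22 <= 1) (Hp112 : 0 <= p112 <= 1) (Hp212 : 0 <= p212 <= 1)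
  (Hpj : forall b1 b2, 0 <= pj b1 b2)
  (Hs : pj true true + pj true false + pj false true + pj false false = 1)
  (H1 : pj true true + pj true false = p112)
  (H2 : pj true true + pj false true = p212)
  (HV : 0 < V) (Ham : 0 <= amax) (Heps : 0 < eps) (Heps2 : eps <= p11 - lam).

Definition PhiA (s : nat * nat * nat) : R := let '(Q, _, A) := s in INR Q ^ 2 / 2 + V * INR A.
Definition gA (s : nat * nat * nat) : R := let '(Q, _, _) := s in INR Q.

Lemma aoi_drift pol t s :
  aoi_maximizer p11 p22 p112 p212 V pol ->
  wsum (aoi_step lam delta p11 p22 pj pol t s) PhiA <=
  PhiA s + ((lam ^ 2 + 1) / 2 + V) - eps * gA s.
Proof.
  intros Hmax. destruct s as [[Q B] A]. unfold aoi_step. rewrite wsum_map.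
  set (u := pol t Q B A).
  eapply Rle_trans.
  { apply wsumO_le with (G := lin (INR Q^2/2 + V*INR A + 1/2 + V) (INR Q) (- INR Q)
                                  (-(V * INR (Hn B) * INR A))).
    - intros; apply slot_nn; auto.
    - intros [[[a1 a2] b1] b2]. unfold aoi_next, lin, PhiA.
      rewrite abound. pose proof (qbound Q a1 b1). lra. }
  erewrite EU_lin by eauto.
  pose proof (Hmax t Q B A (true, false)) as Hm. fold u in Hm. unfold aoi_obj in Hm.
  simpl p1 in Hm; simpl p2 in Hm. unfold PhiA, gA.
  pose proof (pos_INR Q).
  assert (eps * INR Q <= (p11 - lam) * INR Q) by (apply Rmult_le_compat_r; lra).
  nra.
Qed.

Definition InvP (s : nat * nat * R) : Prop := let '(_, _, Z) := s in 0 <= Z <= V + amax.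
Definition PhiP (s : nat * nat * R) : R := let '(Q, _, _) := s in INR Q ^ 2 / 2.
Definition gP (s : nat * nat * R) : R := let '(Q, _, _) := s in INR Q.

Lemma p2_01 u : 0 <= p2 p22 p212 u <= 1.
Proof. destruct u as [[|] [|]]; simpl; lra. Qed.

Lemma peak_drift pol t s :
  peak_maximizer p11 p22 p112 p212 pol -> InvP s ->
  wsum (peak_step lam delta p11 p22 amax V pj pol t s) PhiP <=
  PhiP s + ((amax ^ 2 + lam ^ 2 + 2) / 2 + V) - eps * gP s.
Proof.
  intros Hmax HI. destruct s as [[Q B] Z]. unfold peak_step. rewrite wsum_map.
  set (u := pol t Q B Z).
  eapply Rle_trans.
  { apply wsumO_le with (G := lin (INR Q^2/2 + 1/2) (INR Q) (- INR Q) 0).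
    - intros; apply slot_nn; auto.
    - intros [[[a1 a2] b1] b2]. unfold peak_next, lin, PhiP.
      pose proof (qbound Q a1 b1). lra. }
  erewrite EU_lin by eauto.
  pose proof (Hmax t Q B Z (true, false)) as Hm. fold u in Hm. unfold peak_obj in Hm.
  simpl p1 in Hm; simpl p2 in Hm. unfold PhiP, gP. simpl in HI.
  pose proof (pos_INR Q).
  assert (eps * INR Q <= (p11 - lam) * INR Q) by (apply Rmult_le_compat_r; lra).
  pose proof (p2_01 u).
  assert (Z * INR (Hn B) * p2 p22 p212 u <= V + amax).
  { destruct (Hn01 B) as [-> | ->]; simpl INR.
    - nra.
    - assert (Z * p2 p22 p212 u <= Z * 1) by (apply Rmult_le_compat_l; lra). nra. }
  assert (amax <= (amax ^ 2 + 1) / 2) by (pose proof (pow2_ge_0 (amax - 1)); nra).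
  assert (0 <= lam ^ 2) by nra.
  assert (INR Q * p11 = p11 * INR Q) by ring.
  lra.
Qed.

Lemma peak_inv pol t s x :
  InvP s -> In x (peak_step lam delta p11 p22 amax V pj pol t s) ->
  0 <= fst x /\ InvP (snd x).
Proof.
  intros HI Hx. destruct s as [[Q B] Z]. unfold peak_step in Hx.
  apply in_map_iff in Hx. destruct Hx as [[[[a1 a2] b1] b2] [<- _]].
  split; [apply slot_nn; auto|]. simpl in HI |- *.
  assert (0 <= INR (Hn B) * INR (Nat.b2n b2)) by (apply Rmult_le_pos; apply pos_INR).
  split; [apply Rmax_r|]. apply Rmax_lub; [|lra].
  unfold alpha. destruct (Rle_dec Z V); lra.
Qed.

End S.

Lemma final {St} (step : nat -> St -> list (R*St)) (I : St -> Prop) Phi g K eps s0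
  (x : nat -> R) :
  0 < eps -> I s0 ->
  (forall t s, I s -> forall x, In x (step t s) -> 0 <= fst x /\ I (snd x)) ->
  (forall t s, I s -> wsum (step t s) (fun _ => 1) = 1) ->
  (forall t s, I s -> wsum (step t s) Phi <= Phi s + K - eps * g s) ->
  (forall t s x, In x (step t s) -> 0 <= fst x) -> (forall s, 0 <= Phi s) ->
  (forall n, x n = expect step n 0 s0 g) ->
  Rbar_le (LimSup_seq (time_avg x)) (Finite (K / eps)).
Proof.
  intros He HI Hw H1 Hd Hw' HP Hx.
  apply limsup_bound with (d := Phi s0 / eps). intros n Hn.
  pose proof (drift_sum step I Phi g K eps Hw H1 Hd n 0 s0 HI) as D.
  pose proof (expect_nonneg step Phi Hw' HP n 0 s0).
  unfold time_avg.
  replace (map x (seq 0 n)) with (map (fun k => expect step k 0 s0 g) (seq 0 n))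
    by (apply map_ext; intros; auto).
  fold (Fsum step g n 0 s0).
  assert (Hn' : 0 < INR n) by (apply lt_0_INR; lia).
  assert (F : Fsum step g n 0 s0 <= (Phi s0 + INR n * K) / eps).
  { apply Rmult_le_reg_l with eps; auto. field_simplify; lra. }
  apply Rle_trans with (/ INR n * ((Phi s0 + INR n * K) / eps)).
  - apply Rmult_le_compat_l; auto. left; apply Rinv_0_lt_compat; auto.
  - right; field; lra.
Qed.

Theorem lemma4
  (lam delta p11 p22 p112 p212 V amax eps : R) (pj : bool -> bool -> R)
  (A0 : nat)
  (pol_aoi : nat -> nat -> nat -> nat -> decision)
  (pol_peak : nat -> nat -> nat -> R -> decision) :
  0 <= lam <= 1 -> 0 <= delta <= 1 ->
  0 <= p11 <= 1 -> 0 <= p22 <= 1 -> 0 <= p112 <= 1 -> 0 <= p212 <= 1 ->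
  (forall b1 b2, 0 <= pj b1 b2) ->
  pj true true + pj true false + pj false true + pj false false = 1 ->
  pj true true + pj true false = p112 ->
  pj true true + pj false true = p212 ->
  lam < p11 ->
  0 < V -> 0 <= amax ->
  0 < eps -> eps <= Rmin (p11 - lam) (delta * p212) ->
  aoi_maximizer p11 p22 p112 p212 V pol_aoi ->
  peak_maximizer p11 p22 p112 p212 pol_peak ->
  Rbar_le (LimSup_seq (time_avg (EQ_aoi lam delta p11 p22 pj pol_aoi A0)))
          (Finite (((lam ^ 2 + 1) / 2 + V) / eps)) /\
  Rbar_le (LimSup_seq (time_avg (EQ_peak lam delta p11 p22 amax V pj pol_peak)))
          (Finite (((amax ^ 2 + lam ^ 2 + 2) / 2 + V) / eps)).
Proof.
  intros Hlam Hdel Hp11 Hp22 Hp112 Hp212 Hpj Hs H1 H2 Hlt HV Ham Heps Heps2 Ha Hp.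
  assert (He : eps <= p11 - lam) by (eapply Rle_trans; [apply Heps2|apply Rmin_l]).
  split.
  - apply (final (aoi_step lam delta p11 p22 pj pol_aoi) (fun _ => True)
             (PhiA V) gA _ eps (0%nat, 0%nat, A0)); auto.
    + intros t [[Q B] A] _ x Hx. unfold aoi_step in Hx. apply in_map_iff in Hx.
      destruct Hx as [o [<- _]]. split; auto. apply slot_nn; auto.
    + intros t [[Q B] A] _. unfold aoi_step. rewrite wsum_map. eapply EU_one; eauto.
    + intros t s _. apply (aoi_drift lam delta p11 p22 p112 p212 V eps pj Hlam Hdel Hp11 Hp22 Hpj Hs H1 H2 He pol_aoi t s Ha).
    + intros t [[Q B] A] x Hx. unfold aoi_step in Hx. apply in_map_iff in Hx.
      destruct Hx as [o [<- _]]. apply slot_nn; auto.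
    + intros [[Q B] A]. simpl. pose proof (pos_INR Q); pose proof (pos_INR A). nra.
  - apply (final (peak_step lam delta p11 p22 amax V pj pol_peak) (InvP V amax)
             PhiP gP _ eps (0%nat, 0%nat, 0)); auto.
    + simpl; lra.
    + intros t s HI x Hx. apply (peak_inv lam delta p11 p22 V amax pj Hlam Hdel Hp11 Hp22 Hpj HV Ham pol_peak t s x HI Hx).
    + intros t [[Q B] Z] _. unfold peak_step. rewrite wsum_map. eapply EU_one; eauto.
    + intros t s HI. apply (peak_drift lam delta p11 p22 p112 p212 V amax eps pj Hlam Hdel Hp11 Hp22 Hp212 Hpj Hs H1 H2 HV Ham He pol_peak t s Hp HI).
    + intros t [[Q B] Z] x Hx. unfold peak_step in Hx. apply in_map_iff in Hx.
      destruct Hx as [o [<- _]]. apply slot_nn; auto.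
    + intros [[Q B] Z]. simpl. pose proof (pos_INR Q). nra.
Qed.
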